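(* Let $N\ge1$, $v>0$, $\varepsilon>0$, $L_1>0$ and $L_2=1$. Consider the continuous-time Markov chain $(N(t),W(t))$ on $\{0,\dots,N\}\times\{A,I\}$ with transition rates $(k,A)\to(k+1,A)$ at rate $(N-k)v$, $(k,A)\to(k-1,A)$ at rate $k$, $(k,I)\to(k+1,I)$ at rate $\varepsilon(N-k)v$, $(k,I)\to(k-1,I)$ at rate $k$, $(k,I)\to(k,A)$ at rate $L_2$, and $(k,A)\to(k,I)$ at rate $L_1\varepsilon^k$. Then the stationary marginal distribution of $N(t)$ is $$\bar\pi(k)=\frac{\binom Nk(\frac{v}{1+v})^k(\frac{1}{1+v})^{N-k}}{1+(\frac{1+\varepsilon v}{1+v})^NL_1}+\frac{\binom Nk(\frac{\varepsilon v}{1+\varepsilon v})^k(\frac{1}{1+\varepsilon v})^{N-k}}{1+(\frac{1+v}{1+\varepsilon v})^NL_1^{-1}},\qquad k=0,\dots,N,$$ a mixture of the binomial distributions $\mathcal B(N,\frac{v}{1+v})$ and $\mathcal B(N,\frac{\varepsilon v}{1+\varepsilon v})$.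
   Context: This is a model of allosteric multisite phosphorylation: $N(t)$ is the number of phosphorylated sites among $N$, $W(t)\in\{A,I\}$ is the active/inactive state of the protein, $v$ is the kinase/ligand concentration. *)

(* Defs.v *)
(* States of the chain: (k, w) with k : 'I_N.+1 and
   w : bool, where true = A (active), false = I (inactive). *)
From HB Require Import structures.
From mathcomp Require Import all_boot all_order all_algebra.
Set Implicit Arguments. Unset Strict Implicit. Unset Printing Implicit Defensive.
Import Order.TTheory GRing.Theory Num.Theory.
Local Open Scope ring_scope.

Definition state (N : nat) : finType := ('I_N.+1 * bool)%type.

Definition rate (R : realFieldType) (N : nat) (v eps L1 : R)
    (x y : state N) : R :=
  let: (i, a) := x in let: (j, b) := y in
  if a == b then
    if val j == (val i).+1 then (N - val i)%:R * (if a then v else eps * v)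
    else if val i == (val j).+1 then (val i)%:R
    else 0
  else if val i == val j then (if a then L1 * eps ^+ val i else 1)
  else 0.

Definition stationary (R : realFieldType) (N : nat) (v eps L1 : R)
    (pi : state N -> R) : Prop :=
  (forall x, 0 <= pi x) /\ (\sum_x pi x = 1) /\
  (forall y, \sum_(x | x != y) pi x * rate v eps L1 x y
             = pi y * \sum_(x | x != y) rate v eps L1 y x).

Definition pibar (R : realFieldType) (N : nat) (v eps L1 : R) (k : nat) : R :=
  'C(N, k)%:R * (v / (1 + v)) ^+ k * (1 / (1 + v)) ^+ (N - k)
    / (1 + ((1 + eps * v) / (1 + v)) ^+ N * L1)
  + 'C(N, k)%:R * (eps * v / (1 + eps * v)) ^+ k * (1 / (1 + eps * v)) ^+ (N - k)
    / (1 + ((1 + v) / (1 + eps * v)) ^+ N * L1^-1).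

(* Main.v *)
Require Import Defs.
From HB Require Import structures.
From mathcomp Require Import all_boot all_order all_algebra.
From mathcomp Require Import ring lra zify.
Import Order.TTheory GRing.Theory Num.Theory.
Set Implicit Arguments. Unset Strict Implicit.
Local Open Scope ring_scope.

Definition wt (R : realFieldType) (L1 : R) (a : bool) : R := if a then 1 else L1.

Definition mu (R : realFieldType) (N : nat) (v eps L1 : R) (x : state N) : R :=
  let: (i, a) := x in
  wt L1 a * ('C(N, val i)%:R * (if a then v else eps * v) ^+ val i).

Lemma binc (R : realFieldType) (N i : nat) (c : R) :
  'C(N,i)%:R * c^+i * ((N-i)%:R * c) = 'C(N,i.+1)%:R * c^+i.+1 * (i.+1)%:R.
Proof.
have := congr1 (fun n => n%:R : R) (mul_bin_left N i); rewrite /= !natrM => h.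
transitivity ((N-i)%:R * 'C(N,i)%:R * c^+i.+1); first by rewrite exprS; ring.
by rewrite -h; ring.
Qed.

Lemma DB (R : realFieldType) (N : nat) (v eps L1 : R) (x y : state N) :
  mu v eps L1 x * rate v eps L1 x y = mu v eps L1 y * rate v eps L1 y x.
Proof.
move: x y => [i a] [j b]; rewrite /rate /mu /=.
move: (nat_of_ord i) (nat_of_ord j) => {}i {}j.
case: (eqVneq a b) => [<-|nab].
  set c := (if a then v else eps * v).
  have [ej|nj] := eqVneq j i.+1.
    rewrite ej (_ : ((i == i.+2) = false)); last by clear; elim: i.
    rewrite ?eqxx.
    have := binc N i c => h.
    transitivity (wt L1 a * ('C(N, i)%:R * c ^+ i * ((N - i)%:R * c))); first by ring.
    by rewrite h; ring.
  have [ei|ni] := eqVneq i j.+1.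
    rewrite ei ?eqxx.
    have := binc N j c => h.
    transitivity (wt L1 a * ('C(N, j)%:R * c ^+ j * ((N - j)%:R * c))); last by ring.
    by rewrite h; ring.
  by rewrite !mulr0.
have [<-|nij] := eqVneq i j; last by rewrite !mulr0.
by case: a b nab => [] [] //= _; rewrite /wt exprMn; ring.
Qed.

Lemma rate_ge0 (R : realFieldType) (N : nat) (v eps L1 : R) (x y : state N) :
  0 <= v -> 0 <= eps -> 0 <= L1 -> 0 <= rate v eps L1 x y.
Proof.
move=> hv he hl; move: x y => [i a] [j b]; rewrite /rate.
by case: a; case: b => /=; repeat case: ifP => _;
  rewrite ?mulr_ge0 ?exprn_ge0 ?ler0n.
Qed.

Lemma mu_gt0 (R : realFieldType) (N : nat) (v eps L1 : R) (x : state N) :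
  0 < v -> 0 < eps -> 0 < L1 -> 0 < mu v eps L1 x.
Proof.
move=> hv he hl; move: x => [i a]; rewrite /mu /wt.
have hC : 0 < ('C(N, i))%:R :> R by rewrite ltr0n bin_gt0 -ltnS ltn_ord.
by case: a; rewrite ?mulr_gt0 ?exprn_gt0 ?ltr01 // mulr_gt0.
Qed.

Lemma pw (R : realFieldType) (N k : nat) (a b : R) : (k <= N)%N -> b != 0 ->
  (a / b) ^+ k * (1 / b) ^+ (N - k) = a ^+ k / b ^+ N.
Proof.
move=> hk hb; rewrite -{2}(subnKC hk) exprD !expr_div_n expr1n.
by field; rewrite ?expf_neq0.
Qed.

Lemma sumZ (R : realFieldType) (N : nat) (v eps L1 : R) :
  \sum_(x : state N) mu v eps L1 x = (1 + v) ^+ N + L1 * (1 + eps * v) ^+ N.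
Proof.
rewrite (eq_bigr (fun p : state N => mu v eps L1 (p.1, p.2))); last by case.
rewrite -(pair_bigA _ (fun i b => mu v eps L1 (i, b))) /=.
rewrite (eq_bigr (fun i : 'I_N.+1 => 'C(N, i)%:R * v ^+ i + L1 * ('C(N, i)%:R * (eps * v) ^+ i))); last first.
  by move=> i _; rewrite big_bool /= /wt mul1r.
rewrite big_split /= -mulr_sumr !(addrC 1) !exprD1n.
by congr (_ + L1 * _); apply: eq_bigr => i _; rewrite mulr_natl.
Qed.

Lemma pibarE (R : realFieldType) (N : nat) (v eps L1 : R) (k : nat) :
  0 < v -> 0 < eps -> 0 < L1 -> (k <= N)%N ->
  pibar N v eps L1 k =
  ('C(N, k)%:R * v ^+ k + L1 * ('C(N, k)%:R * (eps * v) ^+ k))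
   / ((1 + v) ^+ N + L1 * (1 + eps * v) ^+ N).
Proof.
move=> hv he hl hk.
have h1 : (1 + v) != 0 by rewrite gt_eqF // addr_gt0.
have h2 : (1 + eps * v) != 0 by rewrite gt_eqF // addr_gt0 // mulr_gt0.
rewrite /pibar -(mulrA _ ((v / (1 + v)) ^+ k)) -(mulrA _ ((eps * v / (1 + eps * v)) ^+ k)) !pw // !expr_div_n.
have hX : 0 < (1 + v) ^+ N by rewrite exprn_gt0 // addr_gt0.
have hY : 0 < (1 + eps * v) ^+ N by rewrite exprn_gt0 // addr_gt0 // mulr_gt0.
move: hX hY; set X := (1 + v) ^+ N; set Y := (1 + eps * v) ^+ N => hX hY.
have hXY : X + L1 * Y != 0 by rewrite gt_eqF // addr_gt0 // mulr_gt0.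
have hYX : Y * L1 + X != 0 by rewrite addrC mulrC.
by field; rewrite hXY !gt_eqF.
Qed.

Lemma exist_stat (R : realFieldType) (N : nat) (v eps L1 : R) :
  0 < v -> 0 < eps -> 0 < L1 ->
  stationary v eps L1 (fun x : state N => mu v eps L1 x / \sum_(y : state N) mu v eps L1 y).
Proof.
move=> hv he hl.
set Z := \sum_(y : state N) mu v eps L1 y.
have hZ : 0 < Z by rewrite /Z sumZ addr_gt0 ?mulr_gt0 ?exprn_gt0 ?addr_gt0 ?mulr_gt0.
split; [|split].
- by move=> x; rewrite divr_ge0 ?ltW ?mu_gt0.
- by rewrite -mulr_suml mulfV // gt_eqF.
- move=> y; rewrite mulr_sumr; apply: eq_bigr => x _.
  by rewrite mulrAC DB mulrAC.
Qed.

Lemma harm (R : realFieldType) (N : nat) (v eps L1 : R) (pi : state N -> R) :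
  0 < v -> 0 < eps -> 0 < L1 -> stationary v eps L1 pi ->
  forall y, \sum_(x | x != y) rate v eps L1 y x *
     (pi y / mu v eps L1 y - pi x / mu v eps L1 x) = 0.
Proof.
move=> hv he hl [_ [_ hb]] y.
set f := fun x => pi x / mu v eps L1 x.
have pf : forall x, pi x = f x * mu v eps L1 x.
  by move=> x; rewrite /f divfK // gt_eqF // mu_gt0.
have hmu : mu v eps L1 y != 0 by rewrite gt_eqF // mu_gt0.
have H : \sum_(x | x != y) f x * rate v eps L1 y x
   = f y * \sum_(x | x != y) rate v eps L1 y x.
  apply: (mulfI hmu); rewrite mulr_sumr mulrA [_ * f y]mulrC -pf -hb.
  by apply: eq_bigr => x _; rewrite (pf x) -mulrA DB; ring.
rewrite (eq_bigr (fun x => f y * rate v eps L1 y x - f x * rate v eps L1 y x)); last first.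
  by move=> x _; rewrite /f /=; ring.
by rewrite big_split /= sumrN -mulr_sumr H subrr.
Qed.

Lemma maxprop (R : realFieldType) (N : nat) (v eps L1 : R) (pi : state N -> R) (M : R) :
  0 < v -> 0 < eps -> 0 < L1 -> stationary v eps L1 pi ->
  (forall x, pi x / mu v eps L1 x <= M) ->
  forall y x, pi y / mu v eps L1 y = M -> x != y -> rate v eps L1 y x != 0 ->
  pi x / mu v eps L1 x = M.
Proof.
move=> hv he hl hs hM y x hy hxy hr.
have := harm hv he hl hs y; rewrite hy => /psumr_eq0P H.
have H0 : forall i, i != y -> 0 <= rate v eps L1 y i * (M - pi i / mu v eps L1 i).
  move=> i _; apply: mulr_ge0; first by apply: rate_ge0; apply: ltW.
  by rewrite subr_ge0.
move: (H H0 x hxy) => /eqP; rewrite mulf_eq0 (negbTE hr) /= subr_eq0 => /eqP <- //.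
Qed.

Lemma val_inord n k : (k <= n)%N -> \val (inord k : 'I_n.+1) = k.
Proof. exact: inordK. Qed.

Lemma rate_up (R : realFieldType) (N : nat) (v eps L1 : R) k b :
  0 < v -> 0 < eps -> 0 < L1 -> (k < N)%N ->
  rate v eps L1 ((inord k : 'I_N.+1), b) (inord k.+1, b) != 0.
Proof.
move=> hv he hl hk; have hk2 := ltnW hk; rewrite /rate /= eqxx !val_inord ?eqxx //.
rewrite mulf_neq0 // ?pnatr_eq0 -?lt0n ?subn_gt0 //.
by case: b; rewrite gt_eqF // mulr_gt0.
Qed.

Lemma rate_down (R : realFieldType) (N : nat) (v eps L1 : R) k b :
  0 < v -> 0 < eps -> 0 < L1 -> (k < N)%N ->
  rate v eps L1 ((inord k.+1 : 'I_N.+1), b) (inord k, b) != 0.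
Proof.
move=> hv he hl hk; have hk2 := ltnW hk; rewrite /rate /= eqxx !val_inord ?eqxx //.
have -> : (k == k.+2) = false by clear; elim: k.
by rewrite pnatr_eq0.
Qed.

Lemma rate_flip (R : realFieldType) (N : nat) (v eps L1 : R) (i : 'I_N.+1) b :
  0 < v -> 0 < eps -> 0 < L1 ->
  rate v eps L1 (i, b) (i, ~~ b) != 0.
Proof.
move=> hv he hl; rewrite /rate eqxx.
by case: b => /=; rewrite ?oner_neq0 // mulf_neq0 ?expf_neq0 // gt_eqF.
Qed.

Lemma neq_succ N k (b : bool) : (k < N)%N -> ((inord k.+1 : 'I_N.+1), b) != (inord k, b).
Proof.
move=> hk; rewrite xpair_eqE eqxx andbT -val_eqE !val_inord ?(ltnW hk) //.
by rewrite eqn_leq ltnn.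
Qed.

Unset Implicit Arguments.

Theorem proposition1 (R : realFieldType) (N : nat) (v eps L1 : R)
    (hN : (1 <= N)%N) (hv : 0 < v) (heps : 0 < eps) (hL1 : 0 < L1) :
  (exists pi : state N -> R, stationary v eps L1 pi) /\
  (forall pi : state N -> R, stationary v eps L1 pi ->
     forall k : 'I_N.+1, pi (k, true) + pi (k, false) = pibar N v eps L1 k).
Proof.
split; first by eexists; apply: exist_stat.
move=> pi hs k.
set f := fun x => pi x / mu v eps L1 x.
have [x0 hM] : exists x0, forall x, f x <= f x0.
  case: (@arg_maxP _ _ _ (ord0, true) xpredT f isT) => i _ Hi.
  by exists i => x; exact: Hi.
set M := f x0.
have prop := maxprop hv heps hL1 hs hM.
case: x0 @M hM prop => i0 a0 M hM prop.
have base : forall b, f (i0, b) = M.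
  move=> b; case: (eqVneq b a0) => [-> //|nb].
  have hba : forall x y : bool, x != y -> x = ~~ y by case; case.
  have hna : forall x : bool, (~~ x == x) = false by case.
  rewrite (hba _ _ nb).
  apply: (prop (i0, a0)) => //; last exact: rate_flip.
  by rewrite xpair_eqE eqxx /= hna.
have up : forall d, (i0 + d <= N)%N -> forall b, f (inord ((i0 + d)%N), b) = M.
  elim=> [|d IH] hd b; first by rewrite addn0 inord_val base.
  rewrite addnS in hd *.
  apply: (prop (inord ((i0 + d)%N), b)); first exact: (IH (ltnW hd)).
    exact: neq_succ.
  exact: rate_up.
have down : forall d, (d <= i0)%N -> forall b, f (inord ((i0 - d)%N), b) = M.
  elim=> [|d IH] hd b; first by rewrite subn0 inord_val base.
  have e : (i0 - d = (i0 - d.+1).+1)%N by rewrite subnS prednK // subn_gt0.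
  have hlt : (i0 - d.+1 < N)%N.
    have hi := ltn_ord i0; lia.
  apply: (prop (inord ((i0 - d)%N), b)); first exact: (IH (ltnW hd)).
    rewrite e eq_sym; exact: neq_succ.
  rewrite e; exact: rate_down.
have P : forall kk, (kk <= N)%N -> forall b, f (inord kk, b) = M.
  move=> kk hkk b; case: (leqP i0 kk) => h.
    rewrite -(subnKC h); apply: up; by rewrite subnKC.
  rewrite -(subKn (ltnW h)); apply: down; exact: leq_subr.
have PE : forall x, pi x = M * mu v eps L1 x.
  move=> [i b]; have := P i _ b; rewrite inord_val /f /= => <-.
    by rewrite divfK //; apply: lt0r_neq0; exact: (mu_gt0 (i, b) hv heps hL1).
  by case: i {P}.
have hZ : M * ((1 + v) ^+ N + L1 * (1 + eps * v) ^+ N) = 1.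
  transitivity (\sum_(x : state N) pi x); last by case: hs => _ [].
  rewrite -sumZ mulr_sumr.
  by apply: eq_bigr => x _; rewrite PE.
have hZnz : (1 + v) ^+ N + L1 * (1 + eps * v) ^+ N != 0.
  apply: lt0r_neq0; apply: addr_gt0; first by apply: exprn_gt0; apply: addr_gt0.
  apply: mulr_gt0 => //; apply: exprn_gt0; apply: addr_gt0 => //; exact: mulr_gt0.
have hMe : M = ((1 + v) ^+ N + L1 * (1 + eps * v) ^+ N)^-1.
  by apply: (mulIf hZnz); rewrite hZ mulVf.
have hk : (k <= N)%N by case: k {PE P}.
rewrite pibarE //.
by rewrite !PE -mulrDr hMe /mu /wt /= mul1r mulrC.
Qed.
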